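(* Let $\mathbb{K}$ be a field of characteristic zero, let $t\in\mathbb{K}\setminus\{0,1\}$, and let $\mathfrak{g}$ be a finite-dimensional non-perfect Lie algebra over $\mathbb{K}$ (i.e. $\mathfrak{g}^{(2)}\neq\mathfrak{g}$). Then there is an injective linear map from $\mathcal{D}(t,1,0)(\mathfrak{g})$ into the centroid $\mathcal{C}(\mathfrak{g})=\mathcal{D}(1,1,0)(\mathfrak{g})$ of $\mathfrak{g}$.
   Context: For a Lie algebra $\mathfrak{g}=(V,\mu)$, the derived algebra $\mathfrak{g}^{(2)}$ is the linear span of all products $\mu(X,Y)$. For $t\in\mathbb{K}$, $\mathcal{D}(t,1,0)(\mathfrak{g})$ denotes the space of linear maps $D:V\to V$ with $tD\mu(X,Y)=\mu(DX,Y)$ for all $X,Y\in V$; in particular the centroid is $\mathcal{D}(1,1,0)(\mathfrak{g})=\{D: D\mu(X,Y)=\mu(DX,Y)\ \forall X,Y\}$. *)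

(* Defs.v *)
From HB Require Import structures.
From mathcomp Require Import all_boot all_order all_algebra.
Set Implicit Arguments. Unset Strict Implicit. Unset Printing Implicit Defensive.
Import Order.TTheory GRing.Theory Num.Theory.
Local Open Scope ring_scope.

Section LieDefs.
Variables (K : fieldType) (V : vectType K).

Definition is_lie_bracket (mu : V -> V -> V) : Prop :=
  [/\ (forall (a : K) (x y z : V), mu (a *: x + y) z = a *: mu x z + mu y z),
      (forall (a : K) (x y z : V), mu x (a *: y + z) = a *: mu x y + mu x z),
      (forall x : V, mu x x = 0) &
      (forall x y z : V, mu x (mu y z) + mu y (mu z x) + mu z (mu x y) = 0)].

Definition in_derived (mu : V -> V -> V) (v : V) : Prop :=
  exists s : seq (K * V * V),
    v = \sum_(p <- s) p.1.1 *: mu p.1.2 p.2.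

Definition in_D_t10 (mu : V -> V -> V) (t : K) (D : 'End(V)) : Prop :=
  forall x y : V, t *: D (mu x y) = mu (D x) y.

Definition in_centroid (mu : V -> V -> V) (D : 'End(V)) : Prop :=
  in_D_t10 mu 1 D.

End LieDefs.

(* Main.v *)
Require Import Defs.
From HB Require Import structures.
From mathcomp Require Import all_boot all_order all_algebra.
From mathcomp Require Import ring.
Import GRing.Theory.
Local Open Scope ring_scope.

Section Helpers.
Local Set Implicit Arguments.
Variables (K : fieldType) (V : vectType K).

Definition compr (A : 'End(V)) (D : 'End(V)) : 'End(V) := (D \o A)%VF.

Fact compr_is_semilinear A : semilinear (compr A).
Proof. by split=> [a D|D1 D2]; rewrite /compr (comp_lfunZl, comp_lfunDl). Qed.
HB.instance Definition _ (A : 'End(V)) :=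
  GRing.isSemilinear.Build K 'End(V) 'End(V) _ (compr A) (compr_is_semilinear A).

Variables (mu : V -> V -> V).
Hypothesis Hmu : is_lie_bracket mu.

Lemma muDl x y z : mu (x + y) z = mu x z + mu y z.
Proof. have [H _ _ _] := Hmu. by rewrite -[x]scale1r H !scale1r. Qed.
Lemma mu0l z : mu 0 z = 0.
Proof.
have [H _ _ _] := Hmu. have := H 1 0 0 z. rewrite !scale1r addr0.
by move/eqP; rewrite -subr_eq subrr eq_sym => /eqP.
Qed.
Lemma muZl a x z : mu (a *: x) z = a *: mu x z.
Proof. have [H _ _ _] := Hmu. by rewrite -[a *: x]addr0 H mu0l addr0. Qed.
Lemma muDr x y z : mu x (y + z) = mu x y + mu x z.
Proof. have [_ H _ _] := Hmu. by rewrite -[y]scale1r H !scale1r. Qed.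
Lemma mu0r z : mu z 0 = 0.
Proof.
have [_ H _ _] := Hmu. have := H 1 z 0 0. rewrite !scale1r addr0.
by move/eqP; rewrite -subr_eq subrr eq_sym => /eqP.
Qed.
Lemma muZr a x z : mu x (a *: z) = a *: mu x z.
Proof. have [_ H _ _] := Hmu. by rewrite -[a *: z]addr0 H mu0r addr0. Qed.
Lemma muNl x z : mu (- x) z = - mu x z.
Proof. by rewrite -scaleN1r muZl scaleN1r. Qed.
Lemma mu_anti x y : mu x y = - mu y x.
Proof.
have [_ _ H _] := Hmu. have e := H (x + y).
rewrite muDl !muDr !H add0r addr0 in e.
by apply/eqP; rewrite -addr_eq0 e.
Qed.
Lemma jac x y z : mu (mu x y) z + mu (mu y z) x + mu (mu z x) y = 0.
Proof.
have [_ _ _ H] := Hmu. have := H z x y.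
rewrite (mu_anti z) (mu_anti x (mu y z)) (mu_anti y (mu z x)).
by move/eqP; rewrite -!opprD oppr_eq0 => /eqP.
Qed.

Lemma mu_suml I r (P : pred I) (F : I -> V) z :
  mu (\sum_(i <- r | P i) F i) z = \sum_(i <- r | P i) mu (F i) z.
Proof. exact: (big_morph (fun x => mu x z) (fun x y => muDl x y z) (mu0l z)). Qed.
Lemma mu_sumr I r (P : pred I) (F : I -> V) z :
  mu z (\sum_(i <- r | P i) F i) = \sum_(i <- r | P i) mu z (F i).
Proof. exact: (big_morph (fun x => mu z x) (fun x y => muDr z x y) (mu0r z)). Qed.

Variable t : K.
Hypothesis t0 : t != 0.
Hypothesis t1 : t != 1.
Variable D : 'End(V).
Hypothesis HD : in_D_t10 mu t D.

Lemma HDr x y : mu x (D y) = t *: D (mu x y).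
Proof. by rewrite mu_anti -HD (mu_anti y) linearN scalerN opprK. Qed.

Lemma HD2 x y z : t *: (t *: D (mu (mu x y) z)) = mu (mu (D x) y) z.
Proof. by rewrite HD -muZl HD. Qed.

Lemma keyP a b c : mu (mu (D a) b) c = 0.
Proof.
set x := c; set y := a; set z := b.
set p := mu (mu (D x) y) z; set q := mu (mu (D y) z) x; set r := mu (mu (D z) x) y.
have E1 : p + q + r = 0.
  by rewrite /p /q /r -!HD2 -!scalerDr -!linearD jac raddf0 !scaler0.
have f1 : t *: mu (mu y z) (D x) = q by rewrite HDr HD2.
have f2 : mu (mu z (D x)) y = r by rewrite HDr HD.
have E2 : t *: p + q + t *: r = 0.
  have := congr1 (fun v => t *: v) (jac (D x) y z).
  by rewrite /= !scalerDr f1 f2 scaler0.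
have hq : q = - (t *: p + t *: r).
  by apply/eqP; rewrite -addr_eq0 addrA (addrC q) E2.
have htq : t *: q = - (t *: p + t *: r).
  by apply/eqP; rewrite -addr_eq0 addrA (addrC (t *: q)) -!scalerDr E1 scaler0.
have : (1 - t) *: q = 0 by rewrite scalerBl scale1r {1}hq htq subrr.
by move/eqP; rewrite scaler_eq0 subr_eq0 eq_sym (negbTE t1) /= => /eqP.
Qed.

End Helpers.

Theorem theorem3p6 (K : fieldType) (V : vectType K) (mu : V -> V -> V) (t : K) :
  [pchar K] =i pred0 ->
  t != 0 -> t != 1 ->
  is_lie_bracket mu ->
  (exists v : V, ~ in_derived mu v) ->
  exists phi : 'Hom('End(V), 'End(V)),
    (forall D : 'End(V), in_D_t10 mu t D -> in_centroid mu (phi D)) /\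
    (forall D1 D2 : 'End(V), in_D_t10 mu t D1 -> in_D_t10 mu t D2 ->
        phi D1 = phi D2 -> D1 = D2).
Proof.
move=> _ t0 t1 Hmu _.
pose B := vbasis (fullv : {vspace V}).
pose X := [seq mu x y | x <- (B : seq V), y <- (B : seq V)].
pose U := <<X>>%VS.
have memU : forall x y, mu x y \in U.
  move=> x y; rewrite (coord_vbasis (memvf x)) (coord_vbasis (memvf y)).
  rewrite (mu_suml Hmu); apply: rpred_sum => i _; rewrite (muZl Hmu) (mu_sumr Hmu).
  apply: rpredZ; apply: rpred_sum => j _; rewrite (muZr Hmu); apply: rpredZ.
  apply: memv_span; apply: allpairs_f; apply: mem_nth; by rewrite size_tuple.
have kill : forall D, in_D_t10 mu t D -> forall u, u \in U -> forall c, mu (D u) c = 0.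
  move=> D HD u Hu c.
  have := @coord_span K V _ (in_tuple X) u Hu => ->.
  rewrite linear_sum (mu_suml Hmu) big1 // => i _.
  rewrite linearZ /= (muZl Hmu).
  have : X`_i \in X by apply: mem_nth; rewrite /= ltn_ord.
  case/allpairsP => [[a b] [_ _ ->]] /=.
  have : t *: mu (D (mu a b)) c = 0 by rewrite -(muZl Hmu) HD (keyP Hmu t1 HD).
  by move/eqP; rewrite scaler_eq0 (negbTE t0) /= => /eqP ->; rewrite scaler0.
pose A : 'End(V) := (\1 + (t - 1) *: projv U)%VF.
exists (linfun (compr A)); split.
  move=> D HD x y.
  rewrite lfunE /= /compr !comp_lfunE /A !add_lfunE !scale_lfunE !id_lfunE.
  rewrite (projv_id (memU x y)) scale1r -{1}[mu x y]scale1r -scalerDl (addrC 1 (t - 1)) subrK linearZ /= HD.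
  by rewrite linearD linearZ /= (muDl Hmu) (muZl Hmu) (kill D HD _ (memv_proj U x)) scaler0 addr0.
move=> D1 D2 _ _ E; apply/lfunP => v.
pose P := projv U v.
pose w := v - (1 - t^-1) *: P.
have Aw : A w = v.
  have pZ : projv U ((1 - t^-1) *: P) = (1 - t^-1) *: P.
    by rewrite linearZ /= /P projv_proj.
  rewrite /A add_lfunE id_lfunE scale_lfunE /w linearB /= pZ /P.
  have -> : (t - 1) *: (projv U v - (1 - t^-1) *: projv U v) = (1 - t^-1) *: projv U v.
    rewrite -{1}[projv U v]scale1r -scalerBl scalerA; congr (_ *: _); field.
    exact: t0.
  by rewrite subrK.
rewrite -Aw.
have := congr1 (fun f : 'End(V) => f w) E.
by rewrite !lfunE /= /compr !lfunE /= id_lfunE scale_lfunE.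
Qed.
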